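(* Let $\Gamma$ be a distance-regular graph with valency $k\geq 3$, diameter $D\geq 3$, intersection numbers $a_i,b_i,c_i$, and distinct eigenvalues $k=\theta_0>\theta_1>\cdots>\theta_D$. Then: (i) $\theta_D < \frac{a_1-\sqrt{a_1^2+4k}}{2}$; (ii) $\theta_1 \geq \min\left\{\frac{a_1+\sqrt{a_1^2+4k}}{2},\, a_3\right\}$; (iii) if $D\geq 4$, then $\theta_1\geq \frac{a_1+\sqrt{a_1^2+4k}}{2}$.
   Context: All graphs are finite, simple, undirected and connected. For vertices $x,y$, $d(x,y)$ is the graph distance, $D=\max d(x,y)$ is the diameter, and $\Gamma_i(x)$ is the set of vertices at distance exactly $i$ from $x$. $\Gamma$ is distance-regular if there are integers $b_i,c_i$ such that for all $x,y$ with $d(x,y)=i$, $y$ has exactly $c_i$ neighbours in $\Gamma_{i-1}(x)$ and exactly $b_i$ neighbours in $\Gamma_{i+1}(x)$; then $\Gamma$ is regular of valency $k=b_0$, and $a_i:=k-b_i-c_i$ (the number of neighbours of $y$ in $\Gamma_i(x)$). The eigenvalues of $\Gamma$ are those of its adjacency matrix; a distance-regular graph of diameter $D$ has exactly $D+1$ distinct eigenvalues. *)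

(* Defs.v *)
From HB Require Import structures.
From mathcomp Require Import all_boot all_order all_algebra.
Set Implicit Arguments. Unset Strict Implicit. Unset Printing Implicit Defensive.
Import Order.TTheory GRing.Theory Num.Theory.

Section Graphs.
Variable T : finType.
Variable e : rel T.

Fixpoint reach (n : nat) (x y : T) : bool :=
  match n with
  | 0 => x == y
  | n'.+1 => reach n' x y || [exists z, reach n' x z && e z y]
  end.

(* graph distance d(x,y) = least n with a walk of length <= n
   (for connected graphs, d(x,y) < #|T|) *)
Definition gdist (x y : T) : nat := find (fun n => reach n x y) (iota 0 #|T|).

Definition diameter : nat := \max_(x : T) \max_(y : T) gdist x y.

Definition simple_connected_graph : Prop :=
  symmetric e /\ irreflexive e /\ (forall x y : T, connect e x y).

Definition distance_regular (b c : nat -> nat) : Prop :=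
  forall x y : T,
    #|[set z | e y z && ((gdist x z).+1 == gdist x y)]| = c (gdist x y) /\
    #|[set z | e y z && (gdist x z == (gdist x y).+1)]| = b (gdist x y).

Definition adjmx (R : nzRingType) : 'M[R]_#|T| :=
  \matrix_(i, j) ((e (enum_val i) (enum_val j))%:R)%R.

End Graphs.

(* valency k = b_0 and a_i = k - b_i - c_i *)
Definition inter_a (b c : nat -> nat) (i : nat) : nat := b 0 - b i - c i.

(* Main.v *)
Require Import Defs.
From HB Require Import structures.
From mathcomp Require Import all_boot all_order all_algebra.
From mathcomp Require Import complex.
From mathcomp Require Import zify ring lra.
Set Implicit Arguments. Unset Strict Implicit. Unset Printing Implicit Defensive.
Import Order.TTheory GRing.Theory Num.Theory.

Section Spec.
Local Open Scope ring_scope.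
Variable R : rcfType.
Local Notation C := (R[i]).
Local Notation toC := (real_complex R).

Lemma Re_sum I (r : seq I) (P : pred I) (F : I -> C) :
  complex.Re (\sum_(i <- r | P i) F i) = \sum_(i <- r | P i) complex.Re (F i).
Proof. by elim/big_rec2: _ => // i y1 y2 _ <-; case: (F i); case: y2. Qed.
Lemma Im_sum I (r : seq I) (P : pred I) (F : I -> C) :
  complex.Im (\sum_(i <- r | P i) F i) = \sum_(i <- r | P i) complex.Im (F i).
Proof. by elim/big_rec2: _ => // i y1 y2 _ <-; case: (F i); case: y2. Qed.

Lemma Re_mulC (x : C) (a : R) : complex.Re (x * toC a) = complex.Re x * a.
Proof. by case: x => u v /=; rewrite mulr0 subr0. Qed.
Lemma Im_mulC (x : C) (a : R) : complex.Im (x * toC a) = complex.Im x * a.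
Proof. by case: x => u v /=; rewrite mulr0 add0r. Qed.
Lemma Re_Cmul (x : C) (a : R) : complex.Re (toC a * x) = a * complex.Re x.
Proof. by case: x => u v /=; rewrite mul0r subr0. Qed.
Lemma Im_Cmul (x : C) (a : R) : complex.Im (toC a * x) = a * complex.Im x.
Proof. by case: x => u v /=; rewrite mul0r addr0. Qed.

Lemma conjR (a : R) : Num.conj (toC a) = toC a.
Proof. by rewrite /Num.conj /= oppr0. Qed.
Lemma mulconj (z : C) : z * Num.conj z =
   toC (complex.Re z ^+ 2 + complex.Im z ^+ 2).
Proof. by case: z => a b; apply/eqP; rewrite eq_complex /=; apply/andP; split; apply/eqP; ring. Qed.

Lemma real_spectral n (A : 'M[R]_n) : A^T = A ->
  exists (d : 'I_n -> R) (X Y : 'I_n -> 'rV[R]_n),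
  [/\ forall j, eigenvalue A (d j),
      forall j, X j *m A = d j *: X j,
      forall j, Y j *m A = d j *: Y j,
      forall u : 'rV[R]_n, (u *m u^T) 0 0 =
         \sum_j (((u *m (X j)^T) 0 0)^+2 + ((u *m (Y j)^T) 0 0)^+2) &
      forall u : 'rV[R]_n, (u *m A *m u^T) 0 0 =
         \sum_j d j * (((u *m (X j)^T) 0 0)^+2 + ((u *m (Y j)^T) 0 0)^+2)].
Proof.
move=> As.
pose AC : 'M[C]_n := map_mx toC A.
have ACt : (AC ^t Num.conj)%sesqui = AC.
  apply/matrixP => i j; rewrite !mxE /= -[in RHS]As mxE.
  by rewrite /Num.conj /=; rewrite oppr0.
have ACn : AC \is normalmx by apply/normalmxP; rewrite ACt.
have ACsym : AC \is symmetricmx.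
  by apply/is_hermitianmxP; rewrite expr0 scale1r map_mx_id // map_trmx As.
have ACreal : AC \is a realmx.
  by apply/mxOverP => i j; rewrite mxE; apply/complex_realP; eexists.
have ACh := realsym_hermsym ACsym ACreal.
pose P := spectralmx AC; pose D := spectral_diag AC.
have Pu : P \is unitarymx by exact: spectral_unitarymx.
have Dr : D \is a realmx by exact: hermitian_spectral_diag_real.
have AE : AC = invmx P *m diag_mx D *m P by exact/orthomx_spectralP.
have PPt : P *m (P ^t Num.conj)%sesqui = 1%:M by exact/unitarymxP.
have PtP : (P ^t Num.conj)%sesqui *m P = 1%:M by exact: mulmx1C.
have Pinv : invmx P = (P ^t Num.conj)%sesqui by exact: invmx_unitary.
have PA : P *m AC = diag_mx D *m P.
  by rewrite AE Pinv !mulmxA PPt mul1mx.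
have PAe : forall j l, (P *m AC) j l = D 0 j * P j l.
  by move=> j l; rewrite PA mul_diag_mx mxE.
have Dre : forall j, D 0 j = toC (complex.Re (D 0 j)).
  by move=> j; rewrite RRe_real //; exact: (mxOverP Dr).
pose d j := complex.Re (D 0 j).
pose X j : 'rV[R]_n := \row_l complex.Re (P j l).
pose Y j : 'rV[R]_n := \row_l complex.Im (P j l).
have XA : forall j, X j *m A = d j *: X j.
  move=> j; apply/rowP => l; have := congr1 (@complex.Re R) (PAe j l).
  rewrite [in RHS]Dre Re_Cmul !mxE Re_sum => <-.
  by apply: eq_bigr => m _; rewrite !mxE Re_mulC.
have YA : forall j, Y j *m A = d j *: Y j.
  move=> j; apply/rowP => l; have := congr1 (@complex.Im R) (PAe j l).
  rewrite [in RHS]Dre Im_Cmul !mxE Im_sum => <-.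
  by apply: eq_bigr => m _; rewrite !mxE Im_mulC.
have W : forall u : 'rV[R]_n, exists w : 'rV[C]_n,
   [/\ forall j, complex.Re (w 0 j) = (u *m (X j)^T) 0 0,
       forall j, complex.Im (w 0 j) = - (u *m (Y j)^T) 0 0,
       toC ((u *m u^T) 0 0) = \sum_j w 0 j * Num.conj (w 0 j) &
       toC ((u *m A *m u^T) 0 0) = \sum_j w 0 j * D 0 j * Num.conj (w 0 j)].
  move=> u; pose uC := map_mx toC u; pose w := uC *m (P ^t Num.conj)%sesqui.
  have wt : (w ^t Num.conj)%sesqui = P *m uC^T.
    apply/matrixP => i j; rewrite !mxE rmorph_sum; apply: eq_bigr => l _.
    rewrite !mxE rmorphM; case: (P i l) => a b; apply/eqP; rewrite eq_complex /=; apply/andP; split; apply/eqP; ring.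
  exists w; split.
  - move=> j; rewrite !mxE Re_sum; apply: eq_bigr => l _.
    by rewrite !mxE Re_Cmul; case: (P j l).
  - move=> j; rewrite !mxE Im_sum -sumrN; apply: eq_bigr => l _.
    by rewrite !mxE Im_Cmul; case: (P j l) => a b /=; rewrite mulrN.
  - have -> : toC ((u *m u^T) 0 0) = (w *m (w ^t Num.conj)%sesqui) 0 0.
      rewrite wt /w -mulmxA (mulmxA _ P) PtP mul1mx.
      by rewrite !mxE rmorph_sum; apply: eq_bigr => l _; rewrite !mxE rmorphM.
    by rewrite mxE; apply: eq_bigr => j _; congr (_ * _); rewrite !mxE.
  - have E1 : map_mx toC (u *m A *m u^T) = uC *m AC *m uC^T.
      by rewrite !map_mxM map_trmx.
    have := congr1 (fun M : 'M[C]_1 => M 0 0) E1; rewrite mxE => ->.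
    rewrite AE Pinv !mulmxA -/w -[w *m _ *m _ *m _]mulmxA -wt.
    rewrite mxE; apply: eq_bigr => j _; rewrite mul_mx_diag !mxE.
    by congr (_ * _); rewrite !mxE.
exists d, X, Y; split => //.
- move=> j; case: (eqVneq (X j) 0) => [X0|Xn0]; last first.
    by apply/eigenvalueP; exists (X j).
  case: (eqVneq (Y j) 0) => [Y0|Yn0]; last first.
    by apply/eigenvalueP; exists (Y j).
  have Pj0 : forall l, P j l = 0.
    move=> l; have /rowP/(_ l) := X0; have /rowP/(_ l) := Y0; rewrite !mxE.
    by case: (P j l) => a b /= -> ->.
  have := congr1 (fun M : 'M[C]_n => M j j) PPt; rewrite !mxE big1 ?eqxx => [|l _].
    by move/eqP; rewrite eq_sym oner_eq0.
  by rewrite Pj0 mul0r.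
- move=> u; have [w [wRe wIm key _]] := W u.
  apply: complexI; rewrite key rmorph_sum; apply: eq_bigr => j _.
  by rewrite mulconj wRe wIm sqrrN.
- move=> u; have [w [wRe wIm _ key]] := W u.
  apply: complexI; rewrite key rmorph_sum; apply: eq_bigr => j _.
  by rewrite mulrAC mulconj wRe wIm sqrrN [D 0 j]Dre -rmorphM mulrC.
Qed.
End Spec.

Lemma card_sum (T : finType) (P : pred T) : #|[set z | P z]| = \sum_z (P z : nat).
Proof.
rewrite -sum1_card big_mkcond /=; apply: eq_bigr => z _; rewrite inE; by case: (P z).
Qed.

Section Dist.
Variable T : finType.
Variable e : rel T.
Hypothesis esym : symmetric e.
Hypothesis eirr : irreflexive e.
Hypothesis econn : forall x y : T, connect e x y.

Lemma reachS n x y :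
  reach e n.+1 x y = reach e n x y || [exists z, reach e n x z && e z y].
Proof. by []. Qed.
Lemma reach0 x y : reach e 0 x y = (x == y).
Proof. by []. Qed.

Lemma reach_mono n m x y : n <= m -> reach e n x y -> reach e m x y.
Proof.
move=> /subnK <-; elim: (m - n) => [//|p IH] H; by rewrite addSn reachS IH.
Qed.

Lemma reach_edge n x y z : reach e n x y -> e y z -> reach e n.+1 x z.
Proof. by move=> H1 H2; rewrite reachS; apply/orP; right; apply/existsP; exists y; rewrite H1. Qed.

Lemma reach_cons n x y w : e x y -> reach e n y w -> reach e n.+1 x w.
Proof.
move=> exy; elim: n w => [|n IH] w.
  rewrite reach0 reachS => /eqP <-; apply/orP; right; apply/existsP; exists x; by rewrite reach0 eqxx.
rewrite reachS => /orP [H|/existsP[z /andP[H1 H2]]].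
  by rewrite reachS IH.
by rewrite reachS; apply/orP; right; apply/existsP; exists z; rewrite IH.
Qed.

Lemma reach_path p x : path e x p -> reach e (size p) x (last x p).
Proof.
elim: p x => [|y p IH] x /=; first by [].

by case/andP => exy /IH; apply: reach_cons.
Qed.

Lemma reach_max x y : reach e #|T|.-1 x y.
Proof.
have /connectP [p pth ->] := econn x y.
case/shortenP: pth => p' pth' un _.
apply: reach_mono (reach_path pth').
have := max_card (mem (x :: p')); rewrite (card_uniqP un) /= => H.
lia.
Qed.
Lemma gdist_spec x y : [/\ gdist e x y < #|T|, reach e (gdist e x y) x y &
  forall m, m < gdist e x y -> ~~ reach e m x y].
Proof.
have T0 : 0 < #|T| by apply/card_gt0P; exists x.
have Hhas : has (fun n => reach e n x y) (iota 0 #|T|).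
  apply/hasP; exists #|T|.-1; last exact: reach_max.
  by rewrite mem_iota; lia.
have Hlt : gdist e x y < #|T| by rewrite -[X in _ < X](size_iota 0) -has_find.
split => //.
  by have := nth_find 0 Hhas; rewrite nth_iota // add0n.
move=> m Hm; have := before_find 0 Hm; rewrite nth_iota ?add0n //.
  by move=> ->.
exact: ltn_trans Hm Hlt.
Qed.

Lemma gdist_le x y m : (gdist e x y <= m) = reach e m x y.
Proof.
have [_ H1 H2] := gdist_spec x y.
apply/idP/idP => [H|H]; first exact: reach_mono H1.
by rewrite leqNgt; apply/negP => /H2; rewrite H.
Qed.
Lemma gdist_xx x : gdist e x x = 0.
Proof. by apply/eqP; rewrite -leqn0 gdist_le reach0. Qed.

Lemma gdist0 x y : gdist e x y = 0 -> x = y.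
Proof. move=> H; have : gdist e x y <= 0 by rewrite H.
by rewrite gdist_le reach0 => /eqP. Qed.

Lemma gdist_edge x y z : e y z -> gdist e x z <= (gdist e x y).+1.
Proof. by move=> eyz; rewrite gdist_le; apply: reach_edge eyz; rewrite -gdist_le. Qed.

Lemma gdist1 x y : (gdist e x y == 1) = e x y.
Proof.
apply/idP/idP => [/eqP H|H].
  have : gdist e x y <= 1 by rewrite H.
  rewrite gdist_le reachS reach0.
  case/orP => [/eqP xy|/existsP[z /andP[]]].
    by move: H; rewrite xy gdist_xx.
  by rewrite reach0 => /eqP ->.
have := gdist_edge x H; rewrite gdist_xx eqn_leq => -> /=.
rewrite lt0n; apply/negP => /eqP /gdist0 xy.
by move: H; rewrite xy eirr.
Qed.

Lemma gdist_pred x y i : gdist e x y = i.+1 -> exists2 z, e z y & gdist e x z = i.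
Proof.
move=> H; have [_ R1 R2] := gdist_spec x y.
move: R1; rewrite H reachS => /orP[R|/existsP[z /andP[R1 ezy]]].
  by have := R2 i; rewrite H ltnSn R => /(_ isT).
exists z => //; apply/eqP; rewrite eqn_leq gdist_le R1 /=.
have := gdist_edge x ezy; rewrite H ltnS //.
Qed.



Variables b c : nat -> nat.
Hypothesis DR : distance_regular e b c.

Lemma deg_card y : #|[set z | e y z]| = b 0.
Proof.
have [_ H] := DR y y; rewrite gdist_xx in H; rewrite -H.
by apply: eq_card => z; rewrite !inE gdist1 andbb.
Qed.

Lemma a_count x y i : gdist e x y = i -> 0 < i ->
  #|[set z | e y z && (gdist e x z == i)]| = inter_a b c i.
Proof.
move=> Hi i0; have [Hc Hb] := DR x y; rewrite Hi in Hc Hb.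
have := deg_card y; rewrite /inter_a !card_sum in Hc Hb * => Hd.
have : \sum_z (e y z : nat) = \sum_z (e y z && ((gdist e x z).+1 == i) : nat) +
   \sum_z (e y z && (gdist e x z == i) : nat) + \sum_z (e y z && (gdist e x z == i.+1) : nat).
  rewrite -!big_split /=; apply: eq_bigr => z _.
  case eyz: (e y z) => //=.
  have h1 := gdist_edge x eyz; rewrite Hi in h1.
  have h2 : i <= (gdist e x z).+1.
    by rewrite -Hi; apply: gdist_edge; rewrite esym.
  by do 3 case: eqP => ? /=; try lia.
rewrite Hd Hc Hb; lia.
Qed.

Local Open Scope ring_scope.
Variable R : rcfType.

Definition Bf (f g : T -> R) := \sum_u \sum_v (e u v)%:R * f u * g v.
Definition Nf (f : T -> R) := \sum_u f u ^+ 2.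
Let kR : R := (b 0)%:R.
Let a1 : R := (inter_a b c 1)%:R.
Definition star (x : T) (s : R) := fun v => s * (v == x)%:R + (e x v)%:R.

Lemma countR (P : pred T) : \sum_z (P z)%:R = (#|[set z | P z]|)%:R :> R.
Proof. by rewrite card_sum natr_sum. Qed.

Lemma degR y : \sum_z (e y z)%:R = kR.
Proof. by rewrite countR deg_card. Qed.

Lemma sum_delta (F : T -> R) x : \sum_v F v * (v == x)%:R = F x.
Proof.
rewrite (bigD1 x) //= eqxx mulr1 big1 ?addr0 // => v /negbTE ->; by rewrite mulr0.
Qed.

Lemma sum_delta_l (F : T -> R) x : \sum_v (v == x)%:R * F v = F x.
Proof. by rewrite -(sum_delta F x); apply: eq_bigr => v _; rewrite mulrC. Qed.

Lemma sum_delta_s (G : T -> R) s x : \sum_u s * (u == x)%:R * G u = s * G x.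
Proof.
rewrite -(sum_delta G x) mulr_sumr; apply: eq_bigr => u _; ring.
Qed.

Lemma cnt_nb x u : e x u -> \sum_v (e u v)%:R * (e x v)%:R = a1 :> R.
Proof.
move=> exu; have g1 : gdist e x u = 1 by apply/eqP; rewrite gdist1.
rewrite /a1 -(a_count g1) // -countR; apply: eq_bigr => v _; rewrite gdist1.
by case: (e u v); case: (e x v); rewrite ?mulr1 ?mulr0.
Qed.

Lemma cnt_self x : \sum_v (e x v)%:R * (e x v)%:R = kR.
Proof. rewrite -(degR x); apply: eq_bigr => v _; by case: (e x v); rewrite ?mulr1 ?mulr0. Qed.

Lemma A_star x s u : \sum_v (e u v)%:R * star x s v =
   s * (e u x)%:R + \sum_v (e u v)%:R * (e x v)%:R.
Proof.
rewrite /star; under eq_bigr => v _ do rewrite mulrDr mulrCA.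
by rewrite big_split /= -mulr_sumr (sum_delta (fun v => (e u v)%:R)).
Qed.

Lemma Bf_rowE f g : Bf f g = \sum_u f u * \sum_v (e u v)%:R * g v.
Proof.
apply: eq_bigr => u _; rewrite mulr_sumr; apply: eq_bigr => v _; ring.
Qed.

Lemma B_star x s : Bf (star x s) (star x s) = 2 * s * kR + kR * a1.
Proof.
rewrite Bf_rowE; under eq_bigr => u _ do rewrite A_star.
rewrite {1}/star; under eq_bigr => u _ do rewrite mulrDl.
rewrite big_split /=.
rewrite sum_delta_s eirr mulr0 add0r cnt_self.
have -> : \sum_u (e x u)%:R * (s * (e u x)%:R + \sum_v (e u v)%:R * (e x v)%:R)
   = \sum_u (e x u)%:R * (s + a1).
  apply: eq_bigr => u _; case exu: (e x u); last by rewrite !mul0r.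
  by rewrite esym exu cnt_nb // mulr1.
rewrite -mulr_suml degR; ring.
Qed.

Lemma N_star x s : Nf (star x s) = s ^+ 2 + kR.
Proof.
rewrite /Nf /star (bigD1 x) //= eqxx eirr mulr1 addr0; congr (_ + _).
rewrite -(degR x) [RHS](bigD1 x) //= eirr add0r; apply: eq_bigr => v /negbTE ->.
by rewrite mulr0 add0r; case: (e x v); rewrite ?expr1n ?expr0n.
Qed.

Lemma sum_star x s : \sum_v star x s v = s + kR.
Proof.
rewrite /star big_split /= -mulr_sumr degR (bigD1 x) //= eqxx big1 ?addr0 ?mulr1 //.
by move=> v /negbTE ->.
Qed.

Lemma Bf_sym f g : Bf f g = Bf g f.
Proof.
rewrite /Bf exchange_big; apply: eq_bigr => u _; apply: eq_bigr => v _.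
rewrite esym; ring.
Qed.

Lemma B_lin f g (t : R) : Bf (fun v => f v + t * g v) (fun v => f v + t * g v)
  = Bf f f + t * (Bf f g + Bf g f) + t ^+ 2 * Bf g g.
Proof.
rewrite /Bf; transitivity (\sum_u \sum_v ((e u v)%:R * f u * f v +
   t * ((e u v)%:R * f u * g v + (e u v)%:R * g u * f v) + t ^+ 2 * ((e u v)%:R * g u * g v))).
  by apply: eq_bigr => u _; apply: eq_bigr => v _; ring.
rewrite -!big_split /= !mulr_sumr -!big_split /=; apply: eq_bigr => u _.
by rewrite -!big_split /= !mulr_sumr -!big_split /=.
Qed.

Lemma N_lin f g (t : R) : Nf (fun v => f v + t * g v)
  = Nf f + 2 * t * (\sum_v f v * g v) + t ^+ 2 * Nf g.
Proof.
rewrite /Nf !mulr_sumr -!big_split /=; apply: eq_bigr => v _; ring.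
Qed.

Lemma Bf_delta f z : Bf (fun v => (v == z)%:R) f = \sum_v (e z v)%:R * f v.
Proof. by rewrite Bf_rowE sum_delta_l. Qed.

Lemma Nf_delta z : Nf (fun v => (v == z)%:R) = 1.
Proof.
rewrite /Nf (bigD1 z) //= eqxx expr1n big1 ?addr0 // => v /negbTE ->; by rewrite expr0n.
Qed.

Lemma B_sep f g (al be : R) : (forall u v, e u v -> f u * g v = 0) ->
  Bf (fun v => al * f v + be * g v) (fun v => al * f v + be * g v)
  = al ^+ 2 * Bf f f + be ^+ 2 * Bf g g.
Proof.
move=> H; rewrite /Bf !mulr_sumr -big_split /=; apply: eq_bigr => u _.
rewrite !mulr_sumr -big_split /=; apply: eq_bigr => v _.
case euv: (e u v); last by rewrite !mul0r; ring.
have h1 := H u v euv; have h2 : f v * g u = 0 by apply: H; rewrite esym.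
have -> : ((true : nat)%:R : R) = 1 by [].
transitivity (al ^+ 2 * (1 * f u * f v) + be ^+ 2 * (1 * g u * g v)
   + al * be * (f u * g v) + al * be * (f v * g u)); first ring.
by rewrite h1 h2 !mulr0 !addr0.
Qed.

Lemma N_sep f g (al be : R) : (forall v, f v * g v = 0) ->
  Nf (fun v => al * f v + be * g v) = al ^+ 2 * Nf f + be ^+ 2 * Nf g.
Proof.
move=> H; rewrite /Nf !mulr_sumr -big_split /=; apply: eq_bigr => v _.
transitivity (al ^+ 2 * f v ^+ 2 + be ^+ 2 * g v ^+ 2 + 2 * al * be * (f v * g v)); first ring.
by rewrite H mulr0 addr0.
Qed.

Lemma exmax (h : T -> R) (t : T) : exists x0, forall y, h y <= h x0.
Proof. case: (@arg_maxP _ _ T t xpredT h isT) => x0 _ H; exists x0 => y; exact: H. Qed.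

Lemma perron_key (h : T -> R) (l : R) :
  (forall x, \sum_y (e x y)%:R * h y = l * h x) -> kR <= l ->
  forall x0, (forall y, h y <= h x0) -> 0 < h x0 -> forall y, h y = h x0.
Proof.
move=> E Hl x0 Hm Hp.
have cl : forall y z, h y = h x0 -> e y z -> h z = h x0.
  move=> y z Hy eyz.
  have S0 : \sum_w (e y w)%:R * (h x0 - h w) = (kR - l) * h x0.
    rewrite (eq_bigr (fun w => (e y w)%:R * h x0 - (e y w)%:R * h w)); last first.
      by move=> w _; rewrite mulrBr.
    by rewrite sumrB -mulr_suml degR E Hy mulrBl.
  have Sge : 0 <= \sum_w (e y w)%:R * (h x0 - h w).
    by apply: sumr_ge0 => w _; apply: mulr_ge0; rewrite ?ler0n // subr_ge0.
  have S00 : \sum_w (e y w)%:R * (h x0 - h w) = 0.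
    apply/eqP; rewrite eq_le Sge andbT S0; apply: mulr_le0_ge0; first by rewrite subr_le0.
    exact: ltW.
  have nn : forall w, true -> 0 <= (e y w)%:R * (h x0 - h w).
    by move=> w _; apply: mulr_ge0; rewrite ?ler0n // subr_ge0.
  have := @psumr_eq0P _ _ _ _ nn S00 z isT; rewrite eyz mul1r => /eqP.
  by rewrite subr_eq0 => /eqP <-.
have Hcl : closed e [pred y | h y == h x0].
  move=> y z eyz; rewrite !inE; apply/idP/idP => /eqP H; apply/eqP.
    exact: cl H eyz.
  by apply: cl H _; rewrite esym.
move=> y; have := closed_connect Hcl (econn x0 y); rewrite !inE eqxx.
by move=> H; apply/eqP; rewrite -H.
Qed.

Lemma perron (h : T -> R) (l : R) :
  (forall x, \sum_y (e x y)%:R * h y = l * h x) -> kR <= l ->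
  forall x y, h x = h y.
Proof.
move=> E Hl x y.
have [x0 Hm] := exmax h x; have [x1 Hm'] := exmax (fun v => - h v) x.
case: (ltrP 0 (h x0)) => [Hp|Hn].
  by rewrite (perron_key E Hl Hm Hp x) (perron_key E Hl Hm Hp y).
have E' : forall x, \sum_y (e x y)%:R * (- h y) = l * (- h x).
  by move=> v; under eq_bigr => w _ do rewrite mulrN; rewrite sumrN E mulrN.
case: (ltrP 0 (- h x1)) => [Hp'|Hn'].
  apply: oppr_inj.
  by rewrite (perron_key E' Hl Hm' Hp' x) (perron_key E' Hl Hm' Hp' y).
have := Hm x; have := Hm y; have := Hm' x; have := Hm' y; lra.
Qed.

Local Notation A := (@adjmx T e R).
Definition rv (f : T -> R) : 'rV[R]_#|T| := \row_i f (enum_val i).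

Lemma sum_enum (F : T -> R) : \sum_(i < #|T|) F (enum_val i) = \sum_x F x.
Proof. by rewrite -(big_enum_val F). Qed.

Lemma rv_N f : ((rv f) *m (rv f)^T) 0 0 = Nf f.
Proof.
rewrite mxE /Nf -sum_enum; apply: eq_bigr => i _; by rewrite !mxE expr2.
Qed.

Lemma rv_X f (X : 'rV[R]_#|T|) :
  ((rv f) *m X^T) 0 0 = \sum_x f x * X 0 (enum_rank x).
Proof.
rewrite mxE -sum_enum; apply: eq_bigr => i _; by rewrite !mxE enum_valK.
Qed.

Lemma rv_B f : ((rv f) *m A *m (rv f)^T) 0 0 = Bf f f.
Proof.
rewrite mxE /Bf -sum_enum.
under [RHS]eq_bigr => i _ do rewrite -(sum_enum (fun v => (e (enum_val i) v)%:R * f (enum_val i) * f v)).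
rewrite [RHS]exchange_big /=; apply: eq_bigr => j _.
rewrite !mxE mulr_suml; apply: eq_bigr => i _; rewrite !mxE; ring.
Qed.

Lemma A_sym : A^T = A.
Proof. by apply/matrixP => i j; rewrite !mxE esym. Qed.

Lemma eig_conv (X : 'rV[R]_#|T|) l : X *m A = l *: X ->
  forall x, \sum_y (e x y)%:R * X 0 (enum_rank y) = l * X 0 (enum_rank x).
Proof.
move=> H x; have /rowP/(_ (enum_rank x)) := H; rewrite !mxE => <-.
rewrite -sum_enum; apply: eq_bigr => i _; rewrite !mxE enum_valK enum_rankK esym.
by rewrite mulrC.
Qed.

Lemma kR_eig (x : T) : eigenvalue A kR.
Proof.
apply/eigenvalueP; exists (rv (fun _ => 1)).
  apply/rowP => j; rewrite !mxE -(degR (enum_val j)) -sum_enum mulr1.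
  by apply: eq_bigr => i _; rewrite !mxE mul1r esym.
apply/negP => /eqP/rowP/(_ (enum_rank x)); rewrite !mxE => /eqP; by rewrite oner_eq0.
Qed.

Variable theta : nat -> R.
Variable Dm : nat.
Hypothesis Hdec : forall i j, (i < j <= Dm)%N -> theta j < theta i.
Hypothesis Hall : forall t, eigenvalue A t -> exists2 i, (i <= Dm)%N & t = theta i.

Lemma theta0_ge (x : T) : kR <= theta 0.
Proof.
have [i Hi ->] := Hall (kR_eig x).
case: i Hi => [|i] Hi //; apply: ltW; apply: Hdec; lia.
Qed.

Lemma B1 f : theta Dm * Nf f <= Bf f f.
Proof.
have [d [X [Y [Hev HX HY HN HQ]]]] := real_spectral A_sym.
rewrite -rv_N -rv_B HN HQ mulr_sumr; apply: ler_sum => j _.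
apply: ler_wpM2r; first by apply: addr_ge0; apply: sqr_ge0.
have [i Hi ->] := Hall (Hev j).
case: (ltngtP i Dm) => [H|H|->] //; first by apply: ltW; apply: Hdec; lia.
lia.
Qed.

Lemma B2 f : \sum_v f v = 0 -> Bf f f <= theta 1 * Nf f.
Proof.
move=> Hf.
have [d [X [Y [Hev HX HY HN HQ]]]] := real_spectral A_sym.
rewrite -rv_N -rv_B HN HQ mulr_sumr; apply: ler_sum => j _.
have [i Hi Ei] := Hall (Hev j).
case: i Hi Ei => [|i] Hi Ei.
  have zero : forall Z : 'rV[R]_#|T|, Z *m A = d j *: Z -> ((rv f) *m Z^T) 0 0 = 0.
    move=> Z HZ; rewrite rv_X.
    case: (pickP (@predT T)) => [x0 _|T0]; last by rewrite big_pred0.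
    have kd : kR <= d j by rewrite Ei; exact: theta0_ge x0.
    have hc := perron (eig_conv HZ) kd.
    rewrite (eq_bigr (fun x => f x * Z 0 (enum_rank x0))); last first.
      by move=> x _; rewrite (hc x x0).
    by rewrite -mulr_suml Hf mul0r.
  by rewrite zero ?zero // expr0n /= addr0 !mulr0.
apply: ler_wpM2r; first by apply: addr_ge0; apply: sqr_ge0.
rewrite Ei; case: i Hi {Ei} => [|i] Hi //; apply: ltW; apply: Hdec; lia.
Qed.

Lemma Nf_ge0 f : 0 <= Nf f.
Proof. by apply: sumr_ge0 => v _; apply: sqr_ge0. Qed.

Lemma two_vec f g (mu : R) :
  (forall u v, e u v -> f u * g v = 0) -> (forall v, f v * g v = 0) ->
  0 < \sum_v f v -> 0 < \sum_v g v -> 0 < Nf f ->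
  mu * Nf f <= Bf f f -> mu * Nf g <= Bf g g -> mu <= theta 1.
Proof.
move=> Hs1 Hs2 Sf Sg Nf0 Hf Hg.
pose al := \sum_v g v; pose be := - \sum_v f v.
pose hh := fun v => al * f v + be * g v.
have Sh : \sum_v hh v = 0.
  rewrite /hh big_split /= -!mulr_sumr /al /be; ring.
have := B2 Sh; rewrite /hh B_sep // N_sep //.
have Ng := Nf_ge0 g.
have a2 : 0 < al ^+ 2 by rewrite exprn_gt0.
have b2 : 0 <= be ^+ 2 by apply: sqr_ge0.
set Nh := al ^+ 2 * Nf f + be ^+ 2 * Nf g.
have Nh0 : 0 < Nh by rewrite /Nh; apply: ltr_wpDr; [apply: mulr_ge0 | apply: mulr_gt0].
move=> H; rewrite -(ler_pM2r Nh0); apply: le_trans H.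
rewrite /Nh mulrDr; apply: lerD; rewrite mulrCA; apply: ler_wpM2l => //.
exact: ltW.
Qed.

Lemma part_i x z (r : R) : gdist e x z = 2%N -> 0 < kR -> r < 0 ->
  r ^+ 2 = a1 * r + kR -> theta Dm < r.
Proof.
move=> Hz kpos rneg Hr.
have zx : (z == x) = false.
  by apply/negP => /eqP Ezx; move: Hz; rewrite Ezx gdist_xx.
have exz : e x z = false.
  by apply/negP => exz; move: Hz; have /eqP -> : gdist e x z == 1 by rewrite gdist1.
pose m := \sum_v (e z v)%:R * (e x v)%:R : R.
have mpos : 0 < m.
  have [w ewz gw] := gdist_pred (Hz : gdist e x z = 1.+1).
  have exw : e x w by rewrite -gdist1 gw.
  rewrite /m (bigD1 w) //= (esym z w) ewz exw mulr1.
  have : 0 <= \sum_(i | i != w) (e z i)%:R * (e x i)%:R :> R.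
    by apply: sumr_ge0 => v _; apply: mulr_ge0; apply: ler0n.
  have -> : ((true : nat)%:R : R) = 1 by []. lra.
have r0 : r != 0 by rewrite lt_eqF.
pose s := kR / r; pose eps := m / r.
pose dz := fun v : T => ((v == z) : nat)%:R : R.
pose h := fun v => star x s v + eps * dz v.
have Bh : Bf h h = 2 * s * kR + kR * a1 + eps * (m + m).
  rewrite /h B_lin B_star (Bf_sym (star x s)) Bf_delta A_star (esym z x) exz.
  rewrite /dz Bf_delta (sum_delta (fun v => (e z v)%:R)) eirr mulr0 add0r mulr0 addr0.
  by [].
have Nh : Nf h = s ^+ 2 + kR + eps ^+ 2.
  rewrite /h N_lin N_star Nf_delta mulr1 /dz (sum_delta (star x s)) /star zx exz.
  by rewrite mulr0 addr0 mulr0 addr0.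
have Nh0 : 0 < Nf h.
  rewrite Nh; have := sqr_ge0 s; have := sqr_ge0 eps; lra.
have key : Bf h h - r * Nf h = m ^+ 2 / r.
  rewrite Bh Nh /s /eps.
  have Ek : kR = r ^+ 2 - a1 * r by rewrite Hr; ring.
  rewrite Ek; field; exact: r0.
have neg : m ^+ 2 / r < 0 by rewrite pmulr_rlt0 ?invr_lt0 // exprn_gt0.
have := B1 h; rewrite -(ltr_pM2r Nh0) => H; lra.
Qed.

Lemma star_or x s u : star x s u = 0 \/ (u = x \/ e x u).
Proof.
rewrite /star; case: eqP => [->|_]; first by right; left.
case exu: (e x u); first by right; right.
by left; rewrite mulr0 add0r.
Qed.

Lemma gd_near x u : (u = x \/ e x u) -> (gdist e x u <= 1)%N.
Proof.
case=> [->|exu]; first by rewrite gdist_xx.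
by have /eqP -> : gdist e x u == 1%N by rewrite gdist1.
Qed.

Lemma B_star_r x r : r != 0 -> r ^+ 2 = a1 * r + kR ->
  Bf (star x (kR / r)) (star x (kR / r)) = r * Nf (star x (kR / r)).
Proof.
move=> r0 Hr; rewrite B_star N_star.
have Ek : kR = r ^+ 2 - a1 * r by rewrite Hr; ring.
rewrite Ek; field; exact: r0.
Qed.

Lemma star_pos x (r : R) : 0 < kR -> 0 < r ->
  0 < \sum_v star x (kR / r) v /\ 0 < Nf (star x (kR / r)).
Proof.
move=> kpos rpos; have sp : 0 < kR / r by rewrite divr_gt0.
rewrite sum_star N_star; split; first lra.
have := sqr_ge0 (kR / r); lra.
Qed.

Lemma part_iii x y (r : R) : (4 <= gdist e x y)%N -> 0 < kR -> 0 < r ->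
  r ^+ 2 = a1 * r + kR -> r <= theta 1.
Proof.
move=> Hxy kpos rpos Hr; have r0 : r != 0 by rewrite gt_eqF.
pose s := kR / r.
have [Sf Nf0] := star_pos x kpos rpos; have [Sg _] := star_pos y kpos rpos.
apply: (@two_vec (star x s) (star y s)) => //.
- move=> u v euv; case: (star_or x s u) => [->|Hu]; first by rewrite mul0r.
  case: (star_or y s v) => [->|Hv]; first by rewrite mulr0.
  have h1 := gd_near Hu; have h2 := gdist_edge x euv.
  exfalso; case: Hv => [Ev|eyv].
    by move: h2; rewrite Ev; lia.
  have := gdist_edge x (_ : e v y); rewrite esym => /(_ eyv); lia.
- move=> v; case: (star_or x s v) => [->|Hu]; first by rewrite mul0r.
  case: (star_or y s v) => [->|Hv]; first by rewrite mulr0.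
  have h1 := gd_near Hu.
  exfalso; case: Hv => [Ev|eyv].
    by move: h1; rewrite Ev; lia.
  have := gdist_edge x (_ : e v y); rewrite esym => /(_ eyv); lia.
- by rewrite B_star_r.
- by rewrite B_star_r.
Qed.

Let a3 : R := (inter_a b c 3)%:R.

Lemma part_ii x z (r : R) : gdist e x z = 3%N -> 0 < kR -> 0 < r ->
  r ^+ 2 = a1 * r + kR -> Num.min r a3 <= theta 1.
Proof.
move=> Hz kpos rpos Hr; have r0 : r != 0 by rewrite gt_eqF.
pose s := kR / r.
pose g := fun v : T => ((gdist e x v == 3) : nat)%:R : R.
have [Sf Nf0] := star_pos x kpos rpos.
have g01 : forall v, g v ^+ 2 = g v.
  by move=> v; rewrite /g; case: (_ == _); rewrite ?expr1n ?expr0n.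
have Bg : Bf g g = a3 * Nf g.
  rewrite Bf_rowE /Nf mulr_sumr; apply: eq_bigr => u _; rewrite g01.
  rewrite /g; case Hu: (gdist e x u == 3); last by rewrite !mul0r mulr0.
  rewrite mul1r mulr1 /a3 -(a_count (x:=x) (y:=u) (i:=3)) ?(eqP Hu) // -countR.
  apply: eq_bigr => v _; by case: (e u v); case: (_ == _); rewrite /= ?mulr1n ?mulr0n ?mulr1 ?mulr0.
have Sg : 0 < \sum_v g v.
  rewrite (bigD1 z) //= /g Hz eqxx.
  have : 0 <= \sum_(i | i != z) ((gdist e x i == 3) : nat)%:R :> R.
    by apply: sumr_ge0 => v _; apply: ler0n.
  have -> : ((true : nat)%:R : R) = 1 by [].
  lra.
apply: (@two_vec (star x s) g) => //.
- move=> u v euv; case: (star_or x s u) => [->|Hu]; first by rewrite mul0r.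
  rewrite /g; case Hv: (gdist e x v == 3); last by rewrite mulr0.
  have h1 := gd_near Hu; have h2 := gdist_edge x euv.
  by move: Hv h1 h2 => /eqP ->; lia.
- move=> v; case: (star_or x s v) => [->|Hu]; first by rewrite mul0r.
  rewrite /g; case Hv: (gdist e x v == 3); last by rewrite mulr0.
  have h1 := gd_near Hu.
  by move: Hv h1 => /eqP ->; lia.
- rewrite B_star_r //; apply: ler_wpM2r; first exact: ltW.
  by rewrite ge_min lexx.
- rewrite Bg; apply: ler_wpM2r; first exact: Nf_ge0.
  by rewrite ge_min lexx orbT.
Qed.

End Dist.

Lemma descend (T : finType) (e : rel T) (econn : forall x y : T, connect e x y)
   x j : forall m y, gdist e x y = (m + j)%N -> exists z, gdist e x z = j.
Proof.
elim=> [|m IH] y H; first by exists y.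
have [z _ Hz] := gdist_pred econn (H : gdist e x y = (m + j).+1).
exact: IH Hz.
Qed.

Local Open Scope ring_scope.

Theorem theorem3p1 (R : rcfType) (T : finType) (e : rel T)
    (b c : nat -> nat) (theta : nat -> R) :
  simple_connected_graph e ->
  distance_regular e b c ->
  (3 <= b 0%N)%N ->
  (3 <= diameter e)%N ->
  (forall i, (i <= diameter e)%N -> eigenvalue (@adjmx _ e R) (theta i)) ->
  (forall i j, (i < j <= diameter e)%N -> theta j < theta i) ->
  (forall t : R, eigenvalue (@adjmx _ e R) t ->
     exists2 i, (i <= diameter e)%N & t = theta i) ->
  let k : R := (b 0%N)%:R in
  let a1 : R := (inter_a b c 1%N)%:R in
  let a3 : R := (inter_a b c 3%N)%:R in
  [/\ theta (diameter e) < (a1 - Num.sqrt (a1 ^+ 2 + 4 * k)) / 2,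
      theta 1%N >= Num.min ((a1 + Num.sqrt (a1 ^+ 2 + 4 * k)) / 2) a3
    & ((4 <= diameter e)%N -> theta 1%N >= (a1 + Num.sqrt (a1 ^+ 2 + 4 * k)) / 2)].
Proof.
move=> [esym [eirr econn]] DR Hb0 HD _ Hdec Hall k a1 a3.
have kpos : 0 < k by rewrite /k ltr0n; lia.
have a1ge : 0 <= a1 by rewrite /a1 ler0n.
set sq := Num.sqrt (a1 ^+ 2 + 4 * k).
have sqE : sq ^+ 2 = a1 ^+ 2 + 4 * k.
  by rewrite /sq sqr_sqrtr //; have := sqr_ge0 a1; lra.
have sqge : 0 <= sq by apply: sqrtr_ge0.
have sqgt : a1 < sq by nra.
have rE : ((a1 - sq) / 2) ^+ 2 = a1 * ((a1 - sq) / 2) + k.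
  have -> : ((a1 - sq) / 2) ^+ 2 = (a1 ^+ 2 - 2 * a1 * sq + sq ^+ 2) / 4.
    by field.
  by rewrite sqE; field.
have rE' : ((a1 + sq) / 2) ^+ 2 = a1 * ((a1 + sq) / 2) + k.
  have -> : ((a1 + sq) / 2) ^+ 2 = (a1 ^+ 2 + 2 * a1 * sq + sq ^+ 2) / 4.
    by field.
  by rewrite sqE; field.
have rneg : (a1 - sq) / 2 < 0 by lra.
have rpos : 0 < (a1 + sq) / 2 by lra.
have [x0 _] : exists x0 : T, true.
  case: (pickP (@predT T)) => [x0 _|T0]; first by exists x0.
  move: HD; rewrite /diameter big1 // => i _; by have := T0 i.
have T0 : (0 < #|T|)%N by apply/card_gt0P; exists x0.
have [x Hx] := bigop.eq_bigmax (fun x => \max_y gdist e x y) T0.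
have [y Hy] := bigop.eq_bigmax (fun y => gdist e x y) T0.
have Dxy : diameter e = gdist e x y by rewrite /diameter Hx Hy.
have [z2 Hz2] : exists z, gdist e x z = 2%N.
  by apply: (descend econn (m := (diameter e - 2)%N) (y := y)); rewrite -Dxy; lia.
have [z3 Hz3] : exists z, gdist e x z = 3%N.
  by apply: (descend econn (m := (diameter e - 3)%N) (y := y)); rewrite -Dxy; lia.
split.
- exact: (part_i esym eirr econn DR Hdec Hall Hz2 kpos rneg rE).
- exact: (part_ii esym eirr econn DR Hdec Hall Hz3 kpos rpos rE').
- move=> HD4; apply: (part_iii esym eirr econn DR Hdec Hall (x:=x) (y:=y) _ kpos rpos rE').
  by rewrite -Dxy.
Qed.
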